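(* Let $a\ge1$ and let $M_0,M_1,\dots,M_{a-1}$ be twisted $I$-adically incremental matrices with entries in $\mathbb{Z}_q[\![\underline\pi]\!]$. Write $\det(I-sM_{a-1}\cdots M_1M_0)=\sum_{k\ge0}(-1)^kr_k(\underline\pi)s^k$. Then for every $k\ge0$, $$\mathrm{val}_I(r_k(\underline\pi))\ge\frac{ak(k-1)(p-1)}{2d},$$ and $$r_k(\underline\pi)\equiv\prod_{j=0}^{a-1}\det\big((M_j)_{mn}\big)_{0\le m,n\le k-1}\pmod{I^{\lceil\frac{ak(k-1)(p-1)+(p-1)}{2d}\rceil}}.$$
   Context: $p$ prime, $d$ a positive integer, $\mathbb{Z}_q$ the unramified extension of $\mathbb{Z}_p$ with residue field $\mathbb{F}_q$, $I=(\pi_1,\dots,\pi_\ell)\subseteq\mathbb{Z}_q[\![\pi_1,\dots,\pi_\ell]\!]$. Define $\mathrm{val}_I(x)=n$ if $x\in I^n\setminus I^{n+1}$ and $\mathrm{val}_I(0)=\infty$. Matrices have rows and columns indexed by $\mathbb{Z}_{\ge0}$. A matrix $(h_{mn})_{m,n\ge0}$ over $\mathbb{Z}_q[\![\underline\pi]\!]$ is twisted $I$-adically incremental if $\mathrm{val}_I(h_{mn})\ge\frac{mp-n}{d}$ for all $m,n\ge0$. Products of such infinite matrices and their characteristic power series $\det(I-sM)=\sum_k(-1)^ks^k\sum_{m_0<\dots<m_{k-1}}\det(M_{m_im_j})$ converge $I$-adically. *)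

(* Defs.v *)
From HB Require Import structures.
From mathcomp Require Import all_boot all_order all_algebra all_fingroup.
Set Implicit Arguments. Unset Strict Implicit. Unset Printing Implicit Defensive.
Import Order.TTheory GRing.Theory Num.Theory.
Local Open Scope ring_scope.

Definition mi (l : nat) := {ffun 'I_l -> nat}.
Definition mdeg (l : nat) (al : mi l) : nat := (\sum_(i < l) al i)%N.

(* Formal power series A[[pi_1,...,pi_l]] as coefficient functions. *)
Definition ps (A : comNzRingType) (l : nat) := mi l -> A.

Section PS.
Variables (A : comNzRingType) (l : nat).

Definition psone : ps A l := fun al => if mdeg al == 0%N then 1 else 0.
Definition psadd (f g : ps A l) : ps A l := fun al => f al + g al.
Definition pssub (f g : ps A l) : ps A l := fun al => f al - g al.

Definition psmul (f g : ps A l) : ps A l := fun al =>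
  \sum_(be : {ffun 'I_l -> 'I_(mdeg al).+1} | [forall i, (be i <= al i)%N])
     f [ffun i => nat_of_ord (be i)] * g [ffun i => (al i - be i)%N].

(* f \in I^n, I = (pi_1,...,pi_l): all monomials of f have total degree >= n. *)
Definition inIpow (n : nat) (f : ps A l) : Prop :=
  forall al, (mdeg al < n)%N -> f al = 0.

Definition valI_eq (f : ps A l) (n : nat) : Prop := inIpow n f /\ ~ inIpow n.+1 f.

(* val_I(f) >= c  (val_I(0) = oo >= c always). *)
Definition valI_ge (f : ps A l) (c : rat) : Prop :=
  forall n : nat, valI_eq f n -> c <= n%:R.

Definition ps_series_lim (F : nat -> ps A l) (S : ps A l) : Prop :=
  forall N : nat, exists K0 : nat, forall K : nat, (K0 <= K)%N ->
    inIpow N (pssub S (fun al => \sum_(k < K) F k al)).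

Definition infmx := nat -> nat -> ps A l.

Definition infmx1 : infmx := fun m n => if m == n then psone else (fun _ => 0).

Definition infmx_mul_is (M N P : infmx) : Prop :=
  forall m n, ps_series_lim (fun k => psmul (M m k) (N k n)) (P m n).

Fixpoint infmx_prod_is (a : nat) (M : nat -> infmx) (P : infmx) : Prop :=
  match a with
  | 0 => forall m n, P m n = infmx1 m n
  | a'.+1 => exists Q, infmx_prod_is a' M Q /\ infmx_mul_is (M a') Q P
  end.

Definition psdet (k : nat) (B : 'I_k -> 'I_k -> ps A l) : ps A l := fun al =>
  \sum_(s : 'S_k) (-1) ^+ s * (\big[psmul/psone]_(i < k) B i (s i)) al.

Definition twisted_incremental (p d : nat) (H : infmx) : Prop :=
  forall m n : nat, valI_ge (H m n) ((((m * p)%N)%:R - n%:R) / d%:R).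

Definition fredholm_coef_is (P : infmx) (k : nat) (r : ps A l) : Prop :=
  forall N : nat, exists K0 : nat, forall K : nat, (K0 <= K)%N ->
    inIpow N (pssub r (fun al =>
      \sum_(m : {ffun 'I_k -> 'I_K} |
              [forall i : 'I_k, forall j : 'I_k, (i < j)%N ==> (m i < m j)%N])
        psdet (fun i j => P (m i) (m j)) al)).

End PS.

(* Main.v *)
Require Import Defs.
From HB Require Import structures.
From mathcomp Require Import all_boot all_order all_algebra all_fingroup.
From mathcomp Require Import zify ring lra.
From mathcomp Require mpoly.
From Stdlib Require Import Classical.
Set Implicit Arguments. Unset Strict Implicit. Unset Printing Implicit Defensive.
Import Order.TTheory GRing.Theory Num.Theory.
Local Open Scope ring_scope.


Lemma det_mul_expand (R : comNzRingType) k L (U : 'M[R]_(k, L)) (V : 'M[R]_(L, k)) :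
  \det (U *m V) = \sum_(g : {ffun 'I_k -> 'I_L})
     (\prod_i U i (g i)) * \det (\matrix_(i, j) V (g i) j).
Proof.
transitivity (\sum_(s : 'S_k) \sum_(g : {ffun 'I_k -> 'I_L})
     (-1) ^+ s * \prod_i (U i (g i) * V (g i) (s i))).
  apply: eq_bigr => s _; rewrite -big_distrr /=; congr (_ * _).
  rewrite -(bigA_distr_bigA (fun i t => U i t * V t (s i))).
  by apply: eq_bigr => i _; rewrite mxE.
rewrite exchange_big; apply: eq_bigr => g _ /=.
rewrite big_distrr /=; apply: eq_bigr => s _.
rewrite big_split /= mulrCA; congr (_ * (_ * _)).
by apply: eq_bigr => i _; rewrite mxE.
Qed.

Lemma card_bound k (A : {set 'I_k}) (h : 'I_k -> nat) y :
  {in A &, injective h} -> (forall j, j \in A -> (h j < y)%N) -> (#|A| <= y)%N.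
Proof.
move=> hinj hy; case: y hy => [|y] hy.
  rewrite leqn0 cards_eq0; apply/eqP/setP => j; rewrite in_set0.
  by apply/negP => /hy.
pose f := fun j => (inord (h j) : 'I_y.+1).
rewrite -(card_in_imset (f := f)); first by apply: leq_trans (max_card _) _; rewrite card_ord.
move=> j1 j2 h1 h2 /(congr1 val); rewrite /f /= !inordK ?hy //; exact: hinj.
Qed.

Section Rank.
Variables (k L : nat) (g : 'I_k -> 'I_L).
Hypothesis ginj : injective g.
Definition rk i : nat := #|[set j | (g j < g i)%N]|.
Lemma rk_lt i : (rk i < k)%N.
Proof.
have : [set j | (g j < g i)%N] \subset [set~ i].
  by apply/subsetP => j; rewrite !inE; apply: contraTneq => ->; rewrite ltnn.
move/subset_leq_card; rewrite cardsC1 card_ord /rk => h.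
have := ltn_ord i; lia.
Qed.
Lemma rk_le i : (rk i <= g i)%N.
Proof.
apply: card_bound => [j1 j2 _ _ /val_inj|j]; first exact: ginj.
by rewrite inE.
Qed.
Lemma rk_mono i i' : (g i < g i')%N -> (rk i < rk i')%N.
Proof.
move=> lt; apply: proper_card; apply/properP; split.
  by apply/subsetP => j; rewrite !inE => /ltn_trans; apply.
by exists i; rewrite !inE ?ltnn.
Qed.
Lemma rk_inj : injective (fun i => Ordinal (rk_lt i)).
Proof.
move=> i i' /(congr1 val) /= E.
case: (ltngtP (g i) (g i')) => [/rk_mono|/rk_mono|/val_inj /ginj //]; by rewrite E ltnn.
Qed.
Lemma sum_inj : (\sum_(i < k) (i : nat) <= \sum_(i < k) (g i : nat))%N.
Proof.
rewrite (reindex_inj rk_inj) /=; apply: leq_sum => i _; exact: rk_le.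
Qed.
Lemma sum_inj_strict i0 : (k <= g i0)%N ->
  (\sum_(i < k) (i : nat) < \sum_(i < k) (g i : nat))%N.
Proof.
move=> hi0; rewrite (reindex_inj rk_inj) /= (bigD1 i0) //= [X in (_ < X)%N](bigD1 i0) //=.
rewrite -addSn; apply: leq_add; first exact: leq_trans (rk_lt i0) hi0.
apply: leq_sum => i _; exact: rk_le.
Qed.
End Rank.

Module Aux.
Import mpoly.
Section S.
Variables (A : comNzRingType) (l : nat).
Local Notation R := {mpoly A[l]}.
Definition toMI (m : 'X_{1..l}) : mi l := [ffun i => m i].
Definition ofMI (al : mi l) : 'X_{1..l} := [multinom al i | i < l].
Lemma toMIK : cancel toMI ofMI. Proof. by move=> m; apply/mnmP=> i; rewrite mnmE ffunE. Qed.
Lemma ofMIK : cancel ofMI toMI. Proof. by move=> m; apply/ffunP=> i; rewrite ffunE mnmE. Qed.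
Lemma mdeg_toMI m : Defs.mdeg (toMI m) = mpoly.mdeg m.
Proof. by rewrite mdegE /Defs.mdeg; apply: eq_bigr => i _; rewrite ffunE. Qed.
Lemma mdeg_ofMI al : mpoly.mdeg (ofMI al) = Defs.mdeg al.
Proof. by rewrite -{2}(ofMIK al) mdeg_toMI. Qed.
Lemma mnm_le_mdeg (m : 'X_{1..l}) i : (m i <= mpoly.mdeg m)%N.
Proof. by rewrite mdegE (bigD1 i) //= leq_addr. Qed.

Lemma psmulE (f g : ps A l) al :
  psmul f g al = \sum_(k : 'X_{1..l < (Defs.mdeg al).+1, (Defs.mdeg al).+1} |
     ofMI al == (k.1 + k.2)%MM) f (toMI k.1) * g (toMI k.2).
Proof.
rewrite /psmul.
set D := Defs.mdeg al.
pose h (k : 'X_{1..l < D.+1, D.+1}) : {ffun 'I_l -> 'I_D.+1} :=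
  [ffun i => inord (k.1 i)].
pose h' (be : {ffun 'I_l -> 'I_D.+1}) : 'X_{1..l < D.+1, D.+1} :=
  (insubd bm0 [multinom (be i : nat) | i < l],
   insubd bm0 [multinom (al i - be i)%N | i < l]).
have hk k i : (h k i : nat) = k.1 i.
  rewrite ffunE inordK // ltnS; apply: leq_trans (mnm_le_mdeg _ _) _.
  by rewrite -ltnS bmdeg.
have degle (m : 'X_{1..l}) : (forall i, m i <= al i)%N -> (mpoly.mdeg m < D.+1)%N.
  move=> le; rewrite ltnS mdegE /D /Defs.mdeg; exact: leq_sum.
rewrite (reindex_onto h h'); last first.
  move=> be /forallP le; apply/ffunP=> i; rewrite ffunE /h' /=.
  rewrite val_insubd degle ?mnmE ?inord_val // => j; rewrite mnmE; exact: le.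
have dg k : (mpoly.mdeg [multinom (al i - h k i)%N | i < l] < D.+1)%N.
  apply: degle => i; rewrite mnmE; exact: leq_subr.
have ee k : [multinom (al i - h k i)%N | i < l] = [multinom (al i - k.1 i)%N | i < l].
  by apply/mnmP=> i; rewrite !mnmE hk.
apply: eq_big => [[k1 k2]|[k1 k2]].
  set k := (k1, k2).
  have -> : [forall i, (h k i <= al i)%N] = (k.1 <= ofMI al)%MM.
    apply/forallP/mnm_lepP => H i; have := H i; by rewrite ?hk mnmE.
  have -> : (h' (h k) == k) = ([multinom (al i - k.1 i)%N | i < l] == k.2).
    rewrite /h' xpair_eqE.
    have -> : insubd bm0 [multinom (h k i : nat) | i < l] == k.1.
      apply/eqP/val_inj; rewrite val_insubd.
      have -> : [multinom (h k i : nat) | i < l] = k.1.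
        by apply/mnmP=> i; rewrite mnmE hk.
      by rewrite bmdeg.
    rewrite /=; apply/eqP/eqP => [<-|E].
      by rewrite val_insubd dg ee.
    by apply/val_inj; rewrite val_insubd dg ee E.
  apply/andP/eqP => [[/mnm_lepP le /eqP <-]|E].
    apply/mnmP => i; rewrite !mnmE subnKC //.
    by have := le i; rewrite mnmE.
  split; first by apply/mnm_lepP => i; rewrite E mnmDE leq_addr.
  apply/eqP/mnmP => i; rewrite !mnmE.
  have := congr1 (fun m : 'X_{1..l} => m i) E; rewrite /= mnmE mnmDE => ->.
  by rewrite addKn.
set k := (k1, k2).
move=> /andP [_ /eqP E]; congr (f _ * g _).
  by apply/ffunP => i; rewrite [LHS]ffunE [RHS]ffunE hk.
have E2 := congr1 (fun x : 'X_{1..l < D.+1, D.+1} => bmnm x.2) E.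
rewrite /= val_insubd dg ee in E2.
by apply/ffunP => i; rewrite [LHS]ffunE [RHS]ffunE hk -E2 mnmE.
Qed.

Definition vge (x : R) (c : rat) := forall m, ((mpoly.mdeg m)%:R < c)%R -> x@_m = 0.

Lemma vge0 c : vge 0 c. Proof. by move=> m _; rewrite mcoeff0. Qed.
Lemma vge_triv x c : c <= 0 -> vge x c.
Proof. by move=> c0 m h; exfalso; move: (le_lt_trans (ler0n _ _) (lt_le_trans h c0)); rewrite ltxx. Qed.
Lemma vge_le x c c' : c' <= c -> vge x c -> vge x c'.
Proof. by move=> le h m hm; apply: h; apply: lt_le_trans le. Qed.
Lemma vgeD x y c : vge x c -> vge y c -> vge (x + y) c.
Proof. by move=> hx hy m hm; rewrite mcoeffD hx ?hy ?addr0. Qed.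
Lemma vgeN x c : vge x c -> vge (- x) c.
Proof. by move=> hx m hm; rewrite mcoeffN hx ?oppr0. Qed.
Lemma vgeB x y c : vge x c -> vge y c -> vge (x - y) c.
Proof. by move=> hx hy; apply: vgeD hx (vgeN hy). Qed.
Lemma vge_sum (I : Type) (r : seq I) (P : pred I) (F : I -> R) c :
  (forall i, P i -> vge (F i) c) -> vge (\sum_(i <- r | P i) F i) c.
Proof.
move=> h; apply: (big_ind (fun x => vge x c)); [exact: vge0 | | exact: h].
by move=> x y; apply: vgeD.
Qed.
Lemma vgeM x y a b : vge x a -> vge y b -> vge (x * y) (a + b).
Proof.
move=> hx hy m hm; rewrite mcoeffM big1 // => [[k1 k2]] /= /eqP E.
have : ((mdeg k1)%:R < a) || ((mdeg k2)%:R < b) :> bool.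
  rewrite E mdegD natrD in hm.
  case: ltP => //= h1; case: ltP => //= h2.
  exfalso; move: (lerD h1 h2) => /(lt_le_trans hm); by rewrite ltxx.
by case/orP => h; [rewrite hx ?mul0r | rewrite hy ?mulr0].
Qed.
Lemma vge_prod (I : Type) (r : seq I) (P : pred I) (F : I -> R) (c : I -> rat) :
  (forall i, P i -> vge (F i) (c i)) -> vge (\prod_(i <- r | P i) F i) (\sum_(i <- r | P i) c i).
Proof.
move=> h; apply: (big_ind2 (fun x c => vge x c)) => //.
  by apply: vge_triv.
by move=> x1 c1 x2 c2 h1 h2; apply: vgeM.
Qed.
Lemma vgeMl x y a : vge x a -> vge (x * y) a.
Proof. move=> h; rewrite -[a]addr0; apply: vgeM h (vge_triv _ _); exact: lexx. Qed.
Lemma vgeMr x y a : vge y a -> vge (x * y) a.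
Proof. move=> h; rewrite -[a]add0r; apply: vgeM (vge_triv _ _) h; exact: lexx. Qed.

Section Trunc.
Variable N : nat.
Definition cong (x y : R) := vge (x - y) N%:R.
Lemma cong_refl x : cong x x. Proof. by rewrite /cong subrr; apply: vge0. Qed.
Lemma cong_sym x y : cong x y -> cong y x.
Proof. by rewrite /cong -opprB => /vgeN; rewrite opprK. Qed.
Lemma cong_trans x y z : cong x y -> cong y z -> cong x z.
Proof. by rewrite /cong => h1 h2; have := vgeD h1 h2; rewrite addrA subrK. Qed.
Lemma congD x x' y y' : cong x x' -> cong y y' -> cong (x + y) (x' + y').
Proof.
rewrite /cong => h1 h2; have -> : (x + y) - (x' + y') = (x - x') + (y - y') by ring.
exact: vgeD.
Qed.
Lemma congB x x' y y' : cong x x' -> cong y y' -> cong (x - y) (x' - y').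
Proof.
rewrite /cong => h1 h2; have -> : (x - y) - (x' - y') = (x - x') - (y - y') by ring.
exact: vgeB.
Qed.
Lemma congM x x' y y' : cong x x' -> cong y y' -> cong (x * y) (x' * y').
Proof.
rewrite /cong => h1 h2.
have -> : x * y - x' * y' = (x - x') * y + x' * (y - y') by ring.
by apply: vgeD; [apply: vgeMl | apply: vgeMr].
Qed.
Lemma cong_sum (I : Type) (r : seq I) (P : pred I) (F G : I -> R) :
  (forall i, P i -> cong (F i) (G i)) -> cong (\sum_(i <- r | P i) F i) (\sum_(i <- r | P i) G i).
Proof.
move=> h; apply: (big_ind2 cong); [exact: cong_refl | | exact: h].
by move=> *; apply: congD.
Qed.
Lemma cong_prod (I : Type) (r : seq I) (P : pred I) (F G : I -> R) :
  (forall i, P i -> cong (F i) (G i)) -> cong (\prod_(i <- r | P i) F i) (\prod_(i <- r | P i) G i).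
Proof.
move=> h; apply: (big_ind2 cong); [exact: cong_refl | | exact: h].
by move=> *; apply: congM.
Qed.
Lemma cong_vge x y c : cong x y -> c <= N%:R -> vge y c -> vge x c.
Proof. by move=> h le hy; rewrite -(subrK y x); apply: vgeD (vge_le le h) hy. Qed.
Lemma cong_det k (B C : 'M[R]_k) : (forall i j, cong (B i j) (C i j)) -> cong (\det B) (\det C).
Proof.
move=> h; apply: cong_sum => s _; apply: congM; first exact: cong_refl.
by apply: cong_prod => i _.
Qed.

Definition Tps (f : ps A l) : R := \sum_(m : 'X_{1..l < N}) f (toMI m) *: 'X_[bmnm m].
Lemma coefT f m : (Tps f)@_m = if (mdeg m < N)%N then f (toMI m) else 0.
Proof.
rewrite /Tps raddf_sum /=.
under eq_bigr => k _ do rewrite mcoeffZ mcoeffX.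
case: ifP => hm.
  rewrite (bigD1 (BMultinom hm)) //= eqxx mulr1 big1 ?addr0 // => k hk.
  case: eqP => [E|]; last by rewrite mulr0.
  by move: hk; rewrite -(inj_eq val_inj) /= E eqxx.
rewrite big1 // => k _; case: eqP => [E|]; last by rewrite mulr0.
by move: (bmdeg k); rewrite E hm.
Qed.

Lemma T_ext f g : (forall al, f al = g al) -> Tps f = Tps g.
Proof. by move=> h; apply: eq_bigr => k _; rewrite h. Qed.
Lemma T_sub f g : Tps (pssub f g) = Tps f - Tps g.
Proof. by apply/mpolyP => m; rewrite mcoeffB !coefT; case: ifP; rewrite ?subrr. Qed.
Lemma T_sumf (I : Type) (r : seq I) (P : pred I) (F : I -> ps A l) :
  Tps (fun al => \sum_(i <- r | P i) F i al) = \sum_(i <- r | P i) Tps (F i).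
Proof.
apply/mpolyP => m; rewrite coefT raddf_sum /=.
under [RHS]eq_bigr => i _ do rewrite coefT.
by case: ifP => _ //; rewrite big1.
Qed.
Lemma T_scale c f : Tps (fun al => c * f al) = c *: Tps f.
Proof. by apply/mpolyP => m; rewrite mcoeffZ !coefT; case: ifP; rewrite ?mulr0. Qed.

Lemma ltN (m : 'X_{1..l}) : ((mdeg m)%:R < N%:R :> rat) -> (mdeg m < N)%N.
Proof. by rewrite ltr_nat. Qed.

Lemma T_mul f g : cong (Tps (psmul f g)) (Tps f * Tps g).
Proof.
move=> m /ltN hm; rewrite mcoeffB coefT hm psmulE mcoeffM.
rewrite mdeg_toMI toMIK -sumrB big1 // => k /eqP E.
have dE := congr1 (@mdeg l) E; rewrite mdegD in dE.
have [h1 h2] : (mdeg k.1 < N)%N /\ (mdeg k.2 < N)%N.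
  move: (mdeg k.1) (mdeg k.2) dE => a b dE.
  move: (mdeg m) hm dE => c hm dE; lia.
by rewrite !coefT h1 h2 subrr.
Qed.

Lemma T_one : cong (Tps (@psone A l)) 1.
Proof.
move=> m /ltN hm; rewrite mcoeffB coefT hm mcoeff1 /psone mdeg_toMI mdeg_eq0.
by case: eqP; rewrite subrr.
Qed.

Lemma T_big k (F : 'I_k -> ps A l) :
  cong (Tps (\big[@psmul A l/@psone A l]_(i < k) F i)) (\prod_(i < k) Tps (F i)).
Proof.
apply: (big_ind2 (fun x y => cong (Tps x) y)); first exact: T_one.
  move=> x1 x2 y1 y2 h1 h2; apply: cong_trans (T_mul _ _) _; exact: congM.
move=> i _; exact: cong_refl.
Qed.

Lemma T_det k (B : 'I_k -> 'I_k -> ps A l) :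
  cong (Tps (psdet B)) (\det (\matrix_(i, j) Tps (B i j))).
Proof.
rewrite /psdet T_sumf /determinant; apply: cong_sum => s _.
rewrite T_scale scaler_sign.
have -> : (-1) ^+ s * \prod_i (\matrix_(i0, j) Tps (B i0 j)) i (s i) =
   (if odd_perm s then - \prod_i Tps (B i (s i)) else \prod_i Tps (B i (s i))).
  rewrite (eq_bigr (fun i => Tps (B i (s i)))) => [|i _]; last by rewrite mxE.
  by case: (odd_perm s); rewrite ?expr1 ?expr0 ?mulN1r ?mul1r.
case: (odd_perm s); last exact: T_big.
by rewrite /cong opprK addrC -opprB; apply: vgeN; apply: T_big.
Qed.

Lemma inIpow_T n f : (n <= N)%N -> inIpow n f -> vge (Tps f) n%:R.
Proof.
move=> nN h m; rewrite ltr_nat => hm; rewrite coefT (leq_trans hm nN).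
by apply: h; rewrite mdeg_toMI.
Qed.
Lemma T_inIpow n f : (n <= N)%N -> vge (Tps f) n%:R -> inIpow n f.
Proof.
move=> nN h al hal; have := h (ofMI al); rewrite coefT mdeg_ofMI ltr_nat hal ofMIK.
by rewrite (leq_trans hal nN) => ->.
Qed.
Lemma series_T (F : nat -> ps A l) S : ps_series_lim F S ->
  exists K0, forall K, (K0 <= K)%N -> cong (Tps S) (\sum_(k < K) Tps (F k)).
Proof.
move=> /(_ N) [K0 h]; exists K0 => K /h /(inIpow_T (leqnn N)).
by rewrite T_sub T_sumf.
Qed.
End Trunc.

Lemma valI_zero (f : ps A l) c : valI_ge f c -> forall al, ((Defs.mdeg al)%:R < c)%R -> f al = 0.
Proof.
move=> h al hal.
have H : forall n, (n <= Defs.mdeg al)%N -> inIpow n.+1 f.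
  elim=> [|n IH] hn.
    case: (classic (inIpow 1 f)) => // H1.
    have := h 0%N (conj (fun al' (h0 : (Defs.mdeg al' < 0)%N) => False_ind _ (notF h0)) H1).
    by move=> c0; exfalso; move: (lt_le_trans hal c0); rewrite ltr_nat.
  case: (classic (inIpow n.+2 f)) => // H1.
  have := h n.+1 (conj (IH (ltnW hn)) H1) => cn.
  exfalso; move: (lt_le_trans hal cn); rewrite ltr_nat ltnS leqNgt.
  by rewrite hn.
exact: (H _ (leqnn _)).
Qed.
Lemma zero_valI (f : ps A l) c : (forall al, ((Defs.mdeg al)%:R < c)%R -> f al = 0) -> valI_ge f c.
Proof.
move=> h n [_ hn]; case: (lerP c n%:R) => // cn; exfalso; apply: hn => al hal.
by apply: h; apply: le_lt_trans cn; rewrite ler_nat -ltnS.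
Qed.
Lemma valI_T N (f : ps A l) c : valI_ge f c -> vge (Tps N f) c.
Proof.
move=> /valI_zero h m hm; rewrite coefT; case: ifP => // _.
by apply: h; rewrite mdeg_toMI.
Qed.

Lemma rat_le1 (P WR WC WG Z A' D : rat) : 1 <= P -> Z <= WG -> 0 < D ->
  (P * WR - WC + (P - 1) * (A' + 1) * Z) / D <=
  (P * WR - WG) / D + (P * WG - WC + (P - 1) * A' * Z) / D.
Proof.
move=> hP hZ hD; rewrite -mulrDl ler_pM2r ?invr_gt0 //.
have : 0 <= (P - 1) * (WG - Z) by apply: mulr_ge0; lra.
nra.
Qed.

Lemma det_vge n (B : 'M[R]_n) (al be : 'I_n -> rat) :
  (forall i j, vge (B i j) (al i - be j)) ->
  vge (\det B) (\sum_i al i - \sum_i be i).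
Proof.
move=> h; apply: vge_sum => s _; apply: vgeMr.
have -> : \sum_i al i - \sum_i be i = \sum_i (al i - be (s i)).
  rewrite sumrB; congr (_ - _); exact: (reindex_inj (@perm_inj _ s)).
by apply: vge_prod => i _.
Qed.

Section Claims.
Variables (p d : nat) (hp : (1 < p)%N) (hd : (0 < d)%N).
Variables (k L : nat) (hkL : (k <= L)%N).
Variables (a : nat) (Mx : nat -> 'M[R]_L).
Hypothesis hM : forall j, (j < a)%N -> forall (r c : 'I_L),
  vge (Mx j r c) ((((r : nat) * p)%:R - (c : nat)%:R) / d%:R).

Fixpoint Xp (j : nat) : 'M[R]_L := if j is j'.+1 then Mx j' *m Xp j' else 1%:M.
Definition minor (X : 'M[R]_L) (r c : 'I_k -> 'I_L) : 'M[R]_k :=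
  \matrix_(i, j) X (r i) (c j).
Definition w (g : 'I_k -> 'I_L) : rat := (\sum_i (g i : nat))%:R.
Definition z : nat := \sum_(i < k) (i : nat).
Definition Z : 'I_k -> 'I_L := fun i => widen_ord hkL i.
Definition D j := \det (minor (Mx j) Z Z).

Lemma wZ : w Z = z%:R. Proof. by []. Qed.

Let pR : rat := p%:R.
Let dR : rat := d%:R.
Lemma dR_gt0 : 0 < dR. Proof. by rewrite /dR ltr0n. Qed.
Lemma pR_ge1 : 1 <= pR. Proof. by rewrite /pR ler1n ltnW. Qed.

Lemma sum_nat_mul (x : 'I_k -> 'I_L) (c : rat) :
  \sum_i (((x i : nat))%:R * c) = (\sum_i (x i : nat))%:R * c.
Proof. by rewrite -mulr_suml natr_sum. Qed.

Lemma minor_bound (X : 'M[R]_L) (hX : forall r c : 'I_L, vge (X r c) ((((r : nat) * p)%:R - (c : nat)%:R) / dR)) r c :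
  vge (\det (minor X r c)) ((pR * w r - w c) / dR).
Proof.
have := @det_vge _ (minor X r c) (fun i => ((r i : nat))%:R * (pR / dR)) (fun j => ((c j : nat))%:R * (1 / dR)).
rewrite !sum_nat_mul -/(w r) -/(w c).
have -> : w r * (pR / dR) - w c * (1 / dR) = (pR * w r - w c) / dR.
  by rewrite /pR; field; rewrite /dR pnatr_eq0 -lt0n.
apply => i j; rewrite mxE; apply: vge_le (hX _ _).
rewrite natrM /pR le_eqVlt; apply/orP; left; apply/eqP; field; by rewrite /dR pnatr_eq0 -lt0n.
Qed.

Lemma minor_mul (X Y : 'M[R]_L) r c :
  minor (X *m Y) r c = (\matrix_(i, t) X (r i) t) *m (\matrix_(t, j) Y t (c j)).
Proof. by apply/matrixP => i j; rewrite !mxE; apply: eq_bigr => t _; rewrite !mxE. Qed.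

Lemma det_minor_noninj (X : 'M[R]_L) (g : {ffun 'I_k -> 'I_L}) c : ~~ injectiveb g ->
  \det (\matrix_(i, j) (\matrix_(t, j0) X t (c j0)) (g i) j) = 0.
Proof.
case/injectivePn => i1 [i2 Di E].
by apply: (determinant_alternate Di) => j; rewrite !mxE E.
Qed.

Lemma sum_row_bound (r g : 'I_k -> 'I_L) :
  \sum_i ((((r i : nat) * p)%:R - (g i : nat)%:R) / dR) = (pR * w r - w g) / dR.
Proof.
rewrite /w !natr_sum mulr_sumr -sumrB mulr_suml; apply: eq_bigr => i _.
by rewrite natrM /pR; congr ((_ - _) / _); exact: mulrC.
Qed.

Lemma claimA a' : (a' < a)%N -> forall r c,
  vge (\det (minor (Xp a'.+1) r c)) ((pR * w r - w c + (pR - 1) * a'%:R * z%:R) / dR).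
Proof.
elim: a' => [|a' IH] ha r c.
  rewrite /= mulmx1 mulr0 mul0r addr0; apply: minor_bound; exact: hM.
rewrite [Xp _]/= minor_mul det_mul_expand; apply: vge_sum => g _.
case: (boolP (injectiveb g)) => ginj; last first.
  by rewrite det_minor_noninj // mulr0; exact: vge0.
have -> : \matrix_(i, j) (\matrix_(t, j0) Xp a'.+1 t (c j0)) (g i) j = minor (Xp a'.+1) g c.
  by apply/matrixP => i j; rewrite !mxE.
under eq_bigr => i _ do rewrite mxE.
have hpr := vge_prod (P := fun _ => true) (r := index_enum 'I_k)
   (fun i _ => @hM _ ha (r i) (g i)).
rewrite sum_row_bound in hpr.
apply: vge_le (vgeM hpr (IH (ltnW ha) g c)).
rewrite -natr1; apply: rat_le1; [exact: pR_ge1 | | exact: dR_gt0].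
rewrite /w ler_nat; apply: sum_inj; exact/injectiveP.
Qed.

Lemma rat_le2 (P WG Z A' D : rat) : 1 <= P -> Z + 1 <= WG -> 0 < D ->
  ((P - 1) * (A' + 1 + 1) * Z + (P - 1)) / D <=
  (P * Z - WG) / D + (P * WG - Z + (P - 1) * A' * Z) / D.
Proof.
move=> hP hZ hD; rewrite -mulrDl ler_pM2r ?invr_gt0 //.
have : 0 <= (P - 1) * (WG - Z - 1) by apply: mulr_ge0; lra.
nra.
Qed.
Lemma rat_le3 (P Z A' D : rat) : 0 < D ->
  ((P - 1) * (A' + 1 + 1) * Z + (P - 1)) / D <=
  (P * Z - Z) / D + ((P - 1) * (A' + 1) * Z + (P - 1)) / D.
Proof. move=> hD; rewrite -mulrDl ler_pM2r ?invr_gt0 //; nra. Qed.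

Lemma claimB a' : (a' < a)%N ->
  vge (\det (minor (Xp a'.+1) Z Z) - \prod_(j < a'.+1) D j)
      (((pR - 1) * (a'.+1)%:R * z%:R + (pR - 1)) / dR).
Proof.
elim: a' => [|a' IH] ha.
  by rewrite /= mulmx1 big_ord1 subrr; exact: vge0.
rewrite (_ : Xp a'.+2 = Mx a'.+1 *m Xp a'.+1) // minor_mul det_mul_expand.
rewrite (bigID (fun g : {ffun 'I_k -> 'I_L} => [forall i, (g i < k)%N])) /=.
set Y := minor (Xp a'.+1) Z Z.
have small : \sum_(g : {ffun 'I_k -> 'I_L} | [forall i, (g i < k)%N])
    (\prod_i (\matrix_(i0, t) Mx a'.+1 (Z i0) t) i (g i)) *
    \det (\matrix_(i, j) (\matrix_(t, j0) Xp a'.+1 t (Z j0)) (g i) j)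
  = D a'.+1 * \det Y.
  rewrite (reindex (fun h : {ffun 'I_k -> 'I_k} =>
      [ffun i => widen_ord hkL (h i)] : {ffun 'I_k -> 'I_L})) /=; last first.
    exists (fun g : {ffun 'I_k -> 'I_L} => [ffun i => insubd i (g i : nat)] : {ffun 'I_k -> 'I_k}).
      move=> h _; apply/ffunP => i; rewrite !ffunE; apply/val_inj.
      by rewrite val_insubd /= ltn_ord.
    move=> g; rewrite inE => /forallP hg; apply/ffunP => i; rewrite !ffunE.
    by apply/val_inj; rewrite /= val_insubd hg.
  rewrite (eq_bigl predT) => [|h]; last first.
    by apply/forallP => i; rewrite ffunE /= ltn_ord.
  rewrite /D -det_mulmx det_mul_expand; apply: eq_bigr => h _; congr (_ * _).
    by apply: eq_bigr => i _; rewrite !mxE ffunE.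
  by congr (\det _); apply/matrixP => i j; rewrite !mxE ffunE.
rewrite small big_ord_recr.
set Big := \sum_(g | _) _.
have -> : D a'.+1 * \det Y + Big - (\prod_(i < a'.+1) D i) * D a'.+1 =
   D a'.+1 * (\det Y - \prod_(i < a'.+1) D i) + Big by ring.
apply: vgeD.
  have hD := minor_bound (r := Z) (c := Z) (@hM _ ha); rewrite wZ in hD.
  apply: vge_le (vgeM hD (IH (ltnW ha))).
  rewrite -!natr1; exact: rat_le3 dR_gt0.
apply: vge_sum => g /forallPn [i0]; rewrite -leqNgt => hi0.
case: (boolP (injectiveb g)) => ginj; last first.
  by rewrite det_minor_noninj // mulr0; exact: vge0.
have -> : \matrix_(i, j) (\matrix_(t, j0) Xp a'.+1 t (Z j0)) (g i) j = minor (Xp a'.+1) g Z.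
  by apply/matrixP => i j; rewrite !mxE.
under eq_bigr => i _ do rewrite mxE.
have hpr := vge_prod (P := fun _ => true) (r := index_enum 'I_k)
   (fun i _ => @hM _ ha (Z i) (g i)).
rewrite sum_row_bound wZ in hpr.
have hA := claimA (r := g) (c := Z) (ltnW ha); rewrite wZ in hA.
apply: vge_le (vgeM hpr hA).
rewrite -!natr1; apply: rat_le2; [exact: pR_ge1 | | exact: dR_gt0].
rewrite /w natr1 ler_nat; apply: (sum_inj_strict (g := g)) hi0; exact/injectiveP.
Qed.

Lemma rat_le4 (P W Z A' D : rat) : 1 <= P -> Z + 1 <= W -> 0 < D ->
  ((P - 1) * (A' + 1) * Z + (P - 1)) / D <= (P * W - W + (P - 1) * A' * Z) / D.
Proof.
move=> hP hZ hD; rewrite ler_pM2r ?invr_gt0 //.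
have : 0 <= (P - 1) * (W - Z - 1) by apply: mulr_ge0; lra.
nra.
Qed.

Lemma incr_ge K (m : {ffun 'I_k -> 'I_K}) :
  [forall i : 'I_k, forall j : 'I_k, (i < j)%N ==> (m i < m j)%N] ->
  forall i : 'I_k, (i <= m i)%N.
Proof.
move=> /forallP hm [i hi] /=; elim: i hi => [|i IH] hi //.
have := hm (Ordinal (ltnW hi)) => /forallP /(_ (Ordinal hi)) /=.
by rewrite ltnSn /= => /(leq_ltn_trans (IH (ltnW hi))).
Qed.

Lemma final_sum K (hK : (k <= K)%N) (hKL : (K <= L)%N) : (0 < a)%N ->
  vge (\sum_(m : {ffun 'I_k -> 'I_K} |
            [forall i : 'I_k, forall j : 'I_k, (i < j)%N ==> (m i < m j)%N])
        \det (\matrix_(i, j) Xp a (widen_ord hKL (m i)) (widen_ord hKL (m j)))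
      - \prod_(j < a) D j)
    (((pR - 1) * a%:R * z%:R + (pR - 1)) / dR).
Proof.
move=> a0; have [a1 ea] : exists a1, a = a1.+1 by case: (a) a0 => // a1; exists a1.
have ha1 : (a1 < a)%N by rewrite ea.
rewrite ea.
pose ZK : {ffun 'I_k -> 'I_K} := [ffun i => widen_ord hK i].
have incZ : [forall i : 'I_k, forall j : 'I_k, (i < j)%N ==> (ZK i < ZK j)%N].
  by apply/forallP => i; apply/forallP => j; rewrite !ffunE; apply/implyP.
rewrite (bigD1 ZK) //=.
have -> : \matrix_(i, j) Xp a1.+1 (widen_ord hKL (ZK i)) (widen_ord hKL (ZK j)) =
          minor (Xp a1.+1) Z Z.
  have e x : widen_ord hKL (widen_ord hK x) = Z x by apply/val_inj.
  by apply/matrixP => i j; rewrite !mxE !ffunE !e.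
rewrite addrAC; apply: vgeD; first exact: claimB ha1.
apply: vge_sum => m /andP [hm hne].
set m' : 'I_k -> 'I_L := fun i => widen_ord hKL (m i).
have -> : \matrix_(i, j) Xp a1.+1 (widen_ord hKL (m i)) (widen_ord hKL (m j)) =
          minor (Xp a1.+1) m' m' by apply/matrixP => i j; rewrite !mxE.
apply: vge_le (claimA (r := m') (c := m') ha1).
rewrite -natr1; apply: rat_le4; [exact: pR_ge1 | | exact: dR_gt0].
rewrite /w natr1 ler_nat.
have [i0 hi0] : exists i0, m i0 != ZK i0.
  apply/existsP; move: hne; apply: contraR; rewrite negb_exists => /forallP h.
  by apply/eqP/ffunP => i; apply/eqP; move: (h i); rewrite negbK.
have ge := incr_ge hm.
have lt : (i0 < m i0)%N.
  rewrite ltn_neqAle ge andbT; move: hi0; apply: contra => /eqP E.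
  by apply/eqP/val_inj; rewrite ffunE /= E.
rewrite /z (bigD1 i0) //= [X in (_ < X)%N](bigD1 i0) //= -addSn.
by apply: leq_add => //; apply: leq_sum => i _.
Qed.
End Claims.

Lemma unif (Pr : nat -> nat -> Prop) :
  (forall i, exists b, forall x, (b <= x)%N -> Pr i x) ->
  forall K, exists b, forall x, (b <= x)%N -> forall i, (i < K)%N -> Pr i x.
Proof.
move=> h; elim=> [|K [b1 IH]]; first by exists 0%N.
have [b2 h2] := h K; exists (maxn b1 b2) => x hx i; rewrite ltnS leq_eqVlt.
case/orP => [/eqP ->|hi]; first by apply: h2; apply: leq_trans hx; exact: leq_maxr.
by apply: IH => //; apply: leq_trans hx; exact: leq_maxl.
Qed.

Lemma rat_tail (N d p m t n K : nat) : (1 < p)%N -> (0 < d)%N -> (K + N * d <= t)%N -> (n < K)%N ->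
  (N%:R : rat) <= (((m * p)%:R - t%:R) / d%:R) + (((t * p)%:R - n%:R) / d%:R).
Proof.
move=> hp hd ht hn; rewrite -mulrDl ler_pdivlMr ?ltr0n //.
have h1 : ((t * 2)%:R : rat) <= (t * p)%:R by rewrite ler_nat leq_mul2l hp orbT.
have h2 : ((K + N * d)%:R : rat) <= t%:R by rewrite ler_nat.
have h3 : (n%:R : rat) <= K%:R by rewrite ler_nat ltnW.
have h4 : (0 : rat) <= (m * p)%:R by [].
rewrite !natrD !natrM in h1 h2 h3 h4 *; nra.
Qed.

Lemma vge_sum_seq (I : eqType) (r : seq I) (F : I -> R) c :
  (forall i, i \in r -> vge (F i) c) -> vge (\sum_(i <- r) F i) c.
Proof. by move=> h; rewrite big_seq; apply: vge_sum. Qed.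

Section Final.
Variables (p d : nat) (hp : (1 < p)%N) (hd : (0 < d)%N) (a : nat).
Variables (M : nat -> infmx A l) (N : nat).
Hypothesis htw : forall j, (j < a)%N -> twisted_incremental p d (M j).

Definition mT j m n := Tps N (M j m n).
Fixpoint Xf (L j m n : nat) : R :=
  if j is j'.+1 then \sum_(t < L) mT j' m t * Xf L j' t n else (m == n)%:R.

Lemma mT_bound j : (j < a)%N -> forall m n : nat,
  vge (mT j m n) (((m * p)%:R - n%:R) / d%:R).
Proof. move=> hj m n; apply: valI_T; exact: htw. Qed.

Lemma Xf_bound L j : (j <= a)%N -> forall t n, (0 < j)%N || (t != n) ->
  vge (Xf L j t n) (((t * p)%:R - n%:R) / d%:R).
Proof.
elim: j => [|j IH] hj t n H.
  by rewrite /= (negbTE H); exact: vge0.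
rewrite /=; apply: vge_sum => u _.
case: (boolP ((0 < j)%N || ((u : nat) != n))) => Hu.
  apply: vge_le (vgeM (mT_bound (m := t) (n := u) hj) (IH (ltnW hj) u n Hu)).
  rewrite -mulrDl ler_pM2r ?invr_gt0 ?ltr0n //.
  have : (u%:R : rat) <= (u * p)%:R by rewrite ler_nat leq_pmulr // ltnW.
  lra.
move: Hu; rewrite negb_or negbK lt0n negbK => /andP [/eqP j0 /eqP un].
by rewrite j0 un /= eqxx mulr1; apply: mT_bound; rewrite -j0.
Qed.

Lemma T_zero : Tps N (fun _ => 0) = 0.
Proof. by apply/mpolyP => x; rewrite coefT mcoeff0; case: ifP. Qed.

Lemma trunc j Q : (j <= a)%N -> infmx_prod_is j M Q -> forall K, exists L0,
  forall L, (L0 <= L)%N -> forall m n, (m < K)%N -> (n < K)%N ->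
  cong N (Tps N (Q m n)) (Xf L j m n).
Proof.
elim: j Q => [|j IH] Q hj hQ K.
  exists 0%N => L _ m n _ _; rewrite /= in hQ; rewrite hQ /infmx1 /=.
  case: eqP => [E|ne]; first exact: T_one.
  by rewrite T_zero; exact: cong_refl.
case: hQ => Q' [hQ' hmul].
pose Pr2 := fun m n x => cong N (Tps N (Q m n)) (\sum_(t < x) Tps N (psmul (M j m t) (Q' t n))).
have [B hB] := unif (Pr := fun m x => forall n, (n < K)%N -> Pr2 m n x)
   (fun m => unif (Pr := Pr2 m) (fun n => series_T N (hmul m n)) K) K.
set T1 := maxn B (K + N * d).
have [L0 hL0] := IH Q' (ltnW hj) hQ' T1.
exists (maxn L0 T1) => L hL m n hm hn.
have hL0L : (L0 <= L)%N by apply: leq_trans hL; exact: leq_maxl.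
have hT1L : (T1 <= L)%N by apply: leq_trans hL; exact: leq_maxr.
have hKT1 : (K + N * d <= T1)%N by exact: leq_maxr.
apply: cong_trans (hB T1 (leq_maxl _ _) m hm n hn) _; rewrite /Pr2.
have -> : Xf L j.+1 m n = \sum_(t < T1) mT j m t * Xf L j t n +
    \sum_(T1 <= t < L) mT j m t * Xf L j t n.
  rewrite /= -(big_mkord (fun _ => true) (fun t => mT j m t * Xf L j t n)).
  by rewrite (big_cat_nat (leq0n T1) hT1L) /= big_mkord.
apply: (cong_trans (y := \sum_(t < T1) mT j m t * Xf L j t n)).
  apply: cong_sum => t _; apply: cong_trans (T_mul _ _) _.
  apply: congM; first exact: cong_refl.
  apply: hL0 => //; apply: leq_trans hn _; apply: leq_trans hKT1; exact: leq_addr.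
rewrite /cong opprD addrA subrr add0r; apply: vgeN.
apply: vge_sum_seq => t; rewrite mem_index_iota => /andP [ht _].
have htn : (t != n).
  apply/eqP => E; move: ht; rewrite E => /(leq_trans hKT1).
  by move/(leq_trans (leq_addr _ _)); rewrite leqNgt hn.
have hX := @Xf_bound L j (ltnW hj) t n.
rewrite htn orbT in hX.
apply: vge_le (vgeM (mT_bound (m := m) (n := t) hj) (hX isT)).
apply: (rat_tail m hp hd _ hn); exact: leq_trans hKT1 ht.
Qed.

Definition Mxf L j : 'M[R]_L := \matrix_(i, t) mT j i t.

Lemma Xp_Xf L j (i t : 'I_L) : Xp (Mxf L) j i t = Xf L j i t.
Proof.
elim: j i t => [|j IH] i t /=; first by rewrite mxE.
by rewrite mxE; apply: eq_bigr => u _; rewrite IH mxE.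
Qed.

Lemma hMxf L : forall j, (j < a)%N -> forall r c : 'I_L,
  vge (Mxf L j r c) ((((r : nat) * p)%:R - (c : nat)%:R) / d%:R).
Proof. by move=> j hj r c; rewrite mxE; exact: mT_bound. Qed.

Lemma main_vge k (P : infmx A l) (r : ps A l) : (0 < a)%N -> infmx_prod_is a M P ->
  fredholm_coef_is P k r -> forall c : rat, c <= N%:R ->
  c <= ((p%:R - 1) * a%:R * (z k)%:R + (p%:R - 1)) / d%:R ->
  vge (Tps N r - \prod_(j < a) \det (\matrix_(i < k, i' < k) mT j i i')) c.
Proof.
move=> ha hP hF c cN c2.
have [K0 hK0] := hF N.
pose K := maxn K0 k.
have hkK : (k <= K)%N by exact: leq_maxr.
have h1 := inIpow_T (leqnn N) (hK0 K (leq_maxl _ _)).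
rewrite T_sub T_sumf in h1.
have [L0 hL0] := trunc (leqnn a) hP K.
pose L := maxn L0 K.
have hKL : (K <= L)%N by exact: leq_maxr.
have hkL : (k <= L)%N by exact: leq_trans hkK hKL.
have hfs := final_sum hp hd hkL (@hMxf L) hkK hKL ha.
set S2 := \sum_(m | _) _ in hfs.
have e2 : S2 = \sum_(m : {ffun 'I_k -> 'I_K} |
            [forall i : 'I_k, forall j : 'I_k, (i < j)%N ==> (m i < m j)%N])
        \det (\matrix_(i, j) Xf L a (m i) (m j)).
  by apply: eq_bigr => m _; congr (\det _); apply/matrixP => i j; rewrite !mxE Xp_Xf.
have eD : \prod_(j < a) D hkL (Mxf L) j = \prod_(j < a) \det (\matrix_(i < k, i' < k) mT j i i').
  apply: eq_bigr => j _; congr (\det _); apply/matrixP => i i'; by rewrite !mxE.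
rewrite e2 eD in hfs.
have hc : cong N (Tps N r) (\sum_(m : {ffun 'I_k -> 'I_K} |
            [forall i : 'I_k, forall j : 'I_k, (i < j)%N ==> (m i < m j)%N])
        \det (\matrix_(i, j) Xf L a (m i) (m j))).
  apply: cong_trans h1 _; apply: cong_sum => m _.
  apply: cong_trans (T_det _) _; apply: cong_det => i j; rewrite mxE.
  rewrite mxE; apply: hL0; by [exact: leq_maxl | exact: ltn_ord].
set S := \sum_(m | _) _ in hc.
have -> : forall x zz : R, x - zz = (x - S) + (S - zz) by move=> *; ring.
apply: vgeD; first exact: vge_le cN hc.
exact: vge_le c2 hfs.
Qed.
End Final.

Lemma sum_i2 k : ((\sum_(i < k) (i : nat)) * 2 = k * k.-1)%N.
Proof.
elim: k => [|k IH]; first by rewrite big_ord0.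
rewrite big_ord_recr /= mulnDl IH; case: k {IH} => [|k] //=; lia.
Qed.

Lemma rat_half (X Y D : rat) : 0 < D -> X <= 2 * Y -> X / (2 * D) <= Y / D.
Proof.
move=> hD hXY; have -> : Y / D = (2 * Y) / (2 * D) by field; exact: lt0r_neq0.
by rewrite ler_pM2r // invr_gt0 mulr_gt0.
Qed.

Lemma det_mT_bound (p d : nat) (hd : (0 < d)%N) (M : nat -> infmx A l) N k j :
  twisted_incremental p d (M j) ->
  vge (\det (\matrix_(i < k, i' < k) mT M N j i i')) ((p%:R - 1) * (z k)%:R / d%:R).
Proof.
move=> htw.
have := @det_vge _ (\matrix_(i < k, i' < k) mT M N j i i')
  (fun i => ((i : nat))%:R * (p%:R / d%:R)) (fun j => ((j : nat))%:R * (1 / d%:R)).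
rewrite -!mulr_suml -natr_sum.
have -> : (z k)%:R * (p%:R / d%:R) - (z k)%:R * (1 / d%:R) = (p%:R - 1) * (z k)%:R / d%:R :> rat.
  by field; rewrite pnatr_eq0 -lt0n.
apply => i i'; rewrite mxE; apply: vge_le (valI_T _ (htw i i')).
rewrite natrM le_eqVlt; apply/orP; left; apply/eqP; field; by rewrite pnatr_eq0 -lt0n.
Qed.

Lemma main_res (p d : nat) (a : nat) (M : nat -> infmx A l) (P : infmx A l) (r : nat -> ps A l) :
  prime p -> (0 < d)%N -> (1 <= a)%N ->
  (forall j, (j < a)%N -> twisted_incremental p d (M j)) ->
  infmx_prod_is a M P ->
  (forall k, fredholm_coef_is P k (r k)) ->
  forall k : nat,
    valI_ge (r k) ((a * k * k.-1 * p.-1)%N%:R / (2 * d)%N%:R) /\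
    inIpow ((a * k * k.-1 * p.-1 + p.-1 + (2 * d).-1) %/ (2 * d))%N
      (pssub (r k) (\big[@psmul A l/@psone A l]_(j < a)
                      psdet (fun i i' : 'I_k => M j i i'))).
Proof.
move=> pp hd ha htw hP hF k.
have hp : (1 < p)%N := prime_gt1 pp.
have hZ := sum_i2 k; rewrite -/(z k) in hZ.
set x := (a * k * k.-1 * p.-1)%N.
set dd := (2 * d)%N.
set N := ((x + p.-1 + dd.-1) %/ dd)%N.
have hdd : (0 < dd)%N by rewrite /dd muln_gt0.
have F1 : (x + p.-1 <= N * dd)%N.
  have := ltn_ceil (x + p.-1 + dd.-1) hdd; rewrite -/N; move: hdd; clear; lia.
have F2 : forall n, (n < N)%N -> (n * dd < x + p.-1)%N.
  move=> n hn; have := leq_trunc_div (x + p.-1 + dd.-1) dd; rewrite -/N.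
  move: hdd hn; clear; nia.
pose c : rat := (x + p.-1)%N%:R / dd%:R.
have hdR : (0 : rat) < d%:R by rewrite ltr0n.
have cN : c <= N%:R by rewrite /c ler_pdivrMr ?ltr0n // -natrM ler_nat.
have e1 : ((p.-1)%:R : rat) = p%:R - 1 by rewrite -subn1 natrB // ltnW.
have ex : ((x + p.-1)%N%:R : rat) = a%:R * (z k)%:R * (p%:R - 1) * 2 + (p%:R - 1).
  rewrite /x -(mulnA a k) -hZ natrD !natrM e1; ring.
have cc2 : c <= ((p%:R - 1) * a%:R * (z k)%:R + (p%:R - 1)) / d%:R.
  rewrite /c /dd natrM ex; apply: rat_half => //.
  have : (1 : rat) <= p%:R by rewrite ler1n ltnW.
  lra.
have hmain := main_vge hp hd htw ha hP (hF k) cN cc2.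
have hlt : forall m : 'X_{1..l}, (mdeg m < N)%N -> ((mdeg m)%:R : rat) < c.
  move=> m /F2 h; rewrite /c ltr_pdivlMr ?ltr0n // -natrM ltr_nat; exact: h.
set Q := \big[@psmul A l/@psone A l]_(j < a) psdet (fun i i' : 'I_k => M j i i').
set Pr := \prod_(j < a) \det (\matrix_(i < k, i' < k) mT M N j i i').
have hQ : cong N (Tps N Q) Pr.
  apply: cong_trans (T_big _) _; apply: cong_prod => j _.
  by apply: cong_trans (T_det _) _; exact: cong_refl.
split.
  apply: zero_valI => al hal.
  have hn : (Defs.mdeg al < N)%N.
    have : ((Defs.mdeg al)%:R : rat) < c.
      apply: lt_le_trans hal _; rewrite /c /dd ler_pM2r ?invr_gt0 ?ltr0n ?muln_gt0 //.
      by rewrite ler_nat leq_addr.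
    rewrite /c ltr_pdivlMr ?ltr0n // -natrM ltr_nat => h.
    rewrite -(ltn_pmul2r hdd); exact: leq_trans h F1.
  have := congr1 (mcoeff (ofMI al)) (subrK Pr (Tps N (r k))).
  rewrite mcoeffD coefT mdeg_ofMI hn ofMIK => <-.
  rewrite hmain ?add0r; last by apply: hlt; rewrite mdeg_ofMI.
  have hPr : vge Pr ((a * k * k.-1 * p.-1)%N%:R / (2 * d)%N%:R).
    apply: vge_le (vge_prod (P := fun _ => true) (r := index_enum 'I_a)
        (fun (j : 'I_a) (_ : true) => @det_mT_bound p d hd M N k j (htw j (ltn_ord j)))).
    rewrite sumr_const card_ord -mulr_natr -/x.
    have ex2 : (x%:R : rat) = a%:R * (z k)%:R * (p%:R - 1) * 2.
      rewrite /x -(mulnA a k) -hZ !natrM e1; ring.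
    rewrite ex2 natrM le_eqVlt; apply/orP; left; apply/eqP; field.
    by rewrite pnatr_eq0 -lt0n.
  by apply: hPr; rewrite mdeg_ofMI.
apply: (T_inIpow (leqnn N)); rewrite T_sub => m hm.
have hmN := ltN hm.
have -> : Tps N (r k) - Tps N Q = (Tps N (r k) - Pr) - (Tps N Q - Pr) by ring.
by rewrite mcoeffB (hmain _ (hlt _ hmN)) (hQ _ hm) subrr.
Qed.
End S.
End Aux.

Theorem mainTheorem11 (p d : nat) (A : comNzRingType) (l a : nat)
    (M : nat -> infmx A l) (P : infmx A l) (r : nat -> ps A l) :
  prime p -> (0 < d)%N -> (1 <= a)%N ->
  (forall j, (j < a)%N -> twisted_incremental p d (M j)) ->
  infmx_prod_is a M P ->
  (forall k, fredholm_coef_is P k (r k)) ->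
  forall k : nat,
    valI_ge (r k) ((a * k * k.-1 * p.-1)%N%:R / (2 * d)%N%:R) /\
    inIpow ((a * k * k.-1 * p.-1 + p.-1 + (2 * d).-1) %/ (2 * d))%N
      (pssub (r k) (\big[@psmul A l/@psone A l]_(j < a)
                      psdet (fun i i' : 'I_k => M j i i'))).
Proof.
exact: Aux.main_res.
Qed.
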